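(* Let $g:[0,\infty)\to\mathbb{R}$ be any function and define $\hat H$ on finite sequences of nonnegative reals with positive sum by $\hat H(a_1,\ldots,a_n)=g(a_1)+\cdots+g(a_n)-g(a_1+\cdots+a_n)$. Define $D(a,b)=g(ab)-a\,g(b)-b\,g(a)$ for $a,b\ge 0$. Then $\hat H$ is homogeneous (i.e. $\hat H(ca_1,\ldots,ca_n)=c\,\hat H(a_1,\ldots,a_n)$ for all $c>0$) if and only if for every $a>0$ the function $b\mapsto D(a,b)$ is additive on $[0,\infty)$, i.e. $D(a,b_1+b_2)=D(a,b_1)+D(a,b_2)$ for all $b_1,b_2\ge0$. Moreover, if $\hat H$ is homogeneous and $g(1)=0$, then $g(ab)=a\,g(b)+b\,g(a)$ for all nonnegative rational numbers $a,b$. *)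

(* Defs.v *)
From Stdlib Require Import Reals List QArith Qreals.
Import ListNotations.
Open Scope R_scope.

(* g : [0,oo) -> R is modelled as g : R -> R; only values on [0,oo) are used. *)

Definition lsum (l : list R) : R := fold_right Rplus 0 l.

Definition Hhat (g : R -> R) (l : list R) : R :=
  lsum (map g l) - g (lsum l).

Definition admissible (l : list R) : Prop :=
  Forall (fun x => 0 <= x) l /\ 0 < lsum l.

Definition Hhat_homogeneous (g : R -> R) : Prop :=
  forall (l : list R) (c : R), admissible l -> 0 < c ->
    Hhat g (map (fun x => c * x) l) = c * Hhat g l.

Definition Dg (g : R -> R) (a b : R) : R := g (a * b) - a * g b - b * g a.

Definition D_additive (g : R -> R) : Prop :=
  forall a, 0 < a -> forall b1 b2, 0 <= b1 -> 0 <= b2 ->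
    Dg g a (b1 + b2) = Dg g a b1 + Dg g a b2.

(* Main.v *)
Require Import Defs.
From Stdlib Require Import Reals List QArith Qreals Lra Lia.
Open Scope R_scope.

Lemma lsum_scale c l : lsum (map (fun x => c * x) l) = c * lsum l.
Proof. induction l; simpl; [ring|rewrite IHl; ring]. Qed.

Lemma lsum_g g c l : lsum (map g (map (fun x => c * x) l)) =
  lsum (map (Dg g c) l) + c * lsum (map g l) + lsum l * g c.
Proof. induction l; simpl; unfold Dg in *; [ring| rewrite IHl; ring]. Qed.

Lemma key g c l : Hhat g (map (fun x => c * x) l) - c * Hhat g l =
  lsum (map (Dg g c) l) - Dg g c (lsum l).
Proof. unfold Hhat. rewrite lsum_g, lsum_scale. unfold Dg. ring. Qed.

Lemma hom_D0 g : Hhat_homogeneous g -> forall c, 0 < c -> Dg g c 0 = 0.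
Proof.
  intros H c Hc. pose proof (H (0 :: 1 :: nil) c) as E.
  assert (A : admissible (0 :: 1 :: nil)).
  { split. repeat (constructor; try lra). simpl; lra. }
  specialize (E A Hc). pose proof (key g c (0 :: 1 :: nil)) as K.
  rewrite E in K. simpl in K. replace (0 + (1 + 0)) with 1 in K by ring. lra.
Qed.

Lemma add_list g c : D_additive g -> 0 < c -> forall l,
  Forall (fun x => 0 <= x) l -> lsum (map (Dg g c) l) = Dg g c (lsum l).
Proof.
  intros H Hc. assert (Z : Dg g c 0 = 0).
  { pose proof (H c Hc 0 0 (Rle_refl 0) (Rle_refl 0)). rewrite Rplus_0_r in H0. lra. }
  induction l; intros F; simpl; [now rewrite Z|].
  inversion F; subst. rewrite IHl by auto. rewrite H; auto.
  clear - H3. induction l; simpl; [lra|]. inversion H3; subst. specialize (IHl H2); lra.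
Qed.

Lemma Dmul g a : D_additive g -> 0 < a -> forall x, 0 <= x -> forall k : nat,
  Dg g a (INR k * x) = INR k * Dg g a x.
Proof.
  intros H Ha x Hx. assert (Z : Dg g a 0 = 0).
  { pose proof (H a Ha 0 0 (Rle_refl 0) (Rle_refl 0)). rewrite Rplus_0_r in H0. lra. }
  induction k. simpl. rewrite Rmult_0_l, Z. ring.
  rewrite S_INR. replace ((INR k + 1) * x) with (INR k * x + x) by ring.
  rewrite H; auto. rewrite IHk. ring. apply Rmult_le_pos; auto. apply pos_INR.
Qed.

Theorem mainTheorem3 (g : R -> R) :
  (Hhat_homogeneous g <-> D_additive g) /\
  (Hhat_homogeneous g -> g 1 = 0 ->
     forall a b : Q, 0 <= Q2R a -> 0 <= Q2R b ->
       g (Q2R a * Q2R b) = Q2R a * g (Q2R b) + Q2R b * g (Q2R a)).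
Proof.
  assert (E : Hhat_homogeneous g <-> D_additive g).
  { split.
    - intros H a Ha b1 b2 H1 H2.
      destruct (Req_dec (b1 + b2) 0) as [E0|E0].
      + assert (b1 = 0) by lra. assert (b2 = 0) by lra. subst.
        rewrite Rplus_0_r, (hom_D0 g H a Ha). ring.
      + assert (A : admissible (b1 :: b2 :: nil)).
        { split. repeat (constructor; try lra). simpl; lra. }
        pose proof (key g a (b1 :: b2 :: nil)) as K.
        rewrite (H _ a A Ha) in K. simpl in K. rewrite Rplus_0_r in K. rewrite Rplus_0_r in K. lra.
    - intros H l c [F _] Hc. pose proof (key g c l) as K.
      rewrite (add_list g c H Hc l F) in K. lra. }
  split; [exact E|].
  intros H g1 a b Ha Hb.
  assert (HD := proj1 E H).
  assert (g0 : g 0 = 0).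
  { pose proof (hom_D0 g H 2 ltac:(lra)) as Z. unfold Dg in Z.
    rewrite Rmult_0_r in Z. lra. }
  assert (Goal : Dg g (Q2R a) (Q2R b) = 0).
  2:{ unfold Dg in Goal. lra. }
  destruct (Req_dec (Q2R a) 0) as [Ea|Ea].
  { rewrite Ea. unfold Dg. rewrite Rmult_0_l, g0. ring. }
  assert (Pa : 0 < Q2R a) by lra.
  destruct b as [num den]. unfold Q2R in *. simpl in *.
  set (x := IZR num * / IZR (Z.pos den)) in *.
  assert (Pd : 0 < IZR (Z.pos den)) by (apply IZR_lt; lia).
  assert (Ex : IZR (Z.pos den) * x = IZR num) by (unfold x; field; lra).
  assert (Nn : (0 <= num)%Z).
  { apply le_IZR. rewrite <- Ex. apply Rmult_le_pos; lra. }
  assert (En : IZR num = INR (Z.to_nat num)).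
  { rewrite INR_IZR_INZ, Znat.Z2Nat.id; auto. }
  assert (Ed : IZR (Z.pos den) = INR (Pos.to_nat den)).
  { rewrite INR_IZR_INZ, Znat.positive_nat_Z; auto. }
  pose proof (Dmul g _ HD Pa x Hb (Pos.to_nat den)) as M.
  rewrite <- Ed, Ex, En in M.
  pose proof (Dmul g _ HD Pa 1 ltac:(lra) (Z.to_nat num)) as M1.
  rewrite Rmult_1_r in M1. rewrite M1 in M.
  assert (D1 : Dg g (Q2R a) 1 = 0).
  { unfold Dg. rewrite Rmult_1_r, g1. ring. }
  unfold Q2R in D1. rewrite D1 in M.
  nra.
Qed.
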